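(* There is a universal constant $C>0$ such that the following holds. Let $n,k,d$ be positive integers with $n\ge 3k$ and suppose $\mathsf{m}^{rd}(d,S_{n,k})>0$. Then $$d\ \ge\ C\,\frac{k\log(n/k)}{\log\bigl(1+2(\mathsf{m}^{rd}(d,S_{n,k})\sqrt{k})^{-1}\bigr)}.$$
   Context: $S_{n,k}\in\{0,1\}^{\binom{n}{k}\times n}$ is the matrix whose rows are all the distinct vectors in $\{0,1\}^n$ with exactly $k$ ones, each appearing exactly once. For $A\in\{0,1\}^{N\times n}$ and $m\ge 0$, unit vectors $U_1,\dots,U_N,V_1,\dots,V_n\in\mathbb{R}^d$ form a margin-$m$, relative-bias-$0$ embedding of $A$ in dimension $d$ if $\langle U_j,V_i\rangle\ge m$ whenever $A_{ji}=1$ and $\langle U_j,V_i\rangle\le -m$ whenever $A_{ji}=0$. $\mathsf{m}^{rd}(d,A)$ is the supremum of $m\ge0$ for which such an embedding exists in dimension $d$ ($-\infty$ if none exists). *)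

(* Defs.v *)
From HB Require Import structures.
From mathcomp Require Import all_boot all_order all_algebra.
From mathcomp Require Import all_classical all_reals all_analysis.
From mathcomp Require Import Rstruct Rstruct_topology.
Set Implicit Arguments. Unset Strict Implicit. Unset Printing Implicit Defensive.
Import Order.TTheory GRing.Theory Num.Theory.
Local Open Scope ring_scope.

Definition RR := Rdefinitions.R.

Definition dotp (d : nat) (u v : 'I_d -> RR) : RR := \sum_(i < d) u i * v i.

Definition unitv (d : nat) (u : 'I_d -> RR) : Prop := dotp u u = 1.

(* A 0/1 matrix with rows indexed by a finite type I and n columns:
   A j i = true means entry 1.  Margin-m, relative-bias-0 embedding in dimension d. *)
Definition rd_embedding (I : finType) (n d : nat) (A : I -> 'I_n -> bool) (m : RR)
    (U : I -> 'I_d -> RR) (V : 'I_n -> 'I_d -> RR) : Prop :=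
  (forall j, unitv (U j)) /\ (forall i, unitv (V i)) /\
  (forall j i, if A j i then m <= dotp (U j) (V i) else dotp (U j) (V i) <= - m).

Definition rd_embeddable (I : finType) (n d : nat) (A : I -> 'I_n -> bool) (m : RR) : Prop :=
  exists U V, @rd_embedding I n d A m U V.

(* m^rd(d, A): supremum of admissible margins m >= 0 (ereal_sup of empty set is -oo) *)
Definition mrd (I : finType) (n d : nat) (A : I -> 'I_n -> bool) : \bar RR :=
  ereal_sup [set (m%:E) | m in [set m : RR | 0 <= m /\ rd_embeddable d A m]].

(* S_{n,k}: rows are all k-subsets of 'I_n, each once; entry (s,i) = 1 iff i \in s *)
Definition ksub (n k : nat) := {s : {set 'I_n} | #|s| == k}.

Definition Snk (n k : nat) : ksub n k -> 'I_n -> bool := fun s i => i \in val s.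

(* Main.v *)
Require Import Defs.
From mathcomp Require Import all_boot all_order all_algebra.
From mathcomp Require Import all_classical all_reals all_analysis.
From mathcomp Require Import Rstruct Rstruct_topology.
From mathcomp Require Import lra ring zify.
Import Order.TTheory GRing.Theory Num.Theory.
Local Open Scope ring_scope.
Set Implicit Arguments. Unset Strict Implicit. Unset Printing Implicit Defensive.
Lemma cs (d : nat) (u x : 'I_d -> RR) : dotp u u = 1 -> (dotp u x) ^+ 2 <= dotp x x.
Proof.
move=> hu; set t := dotp u x.
have h : 0 <= \sum_(r < d) (t * u r - x r) ^+ 2 by apply: sumr_ge0 => r _; apply: sqr_ge0.
have e : \sum_(r < d) (t * u r - x r) ^+ 2 = t ^+ 2 * dotp u u - 2 * t * dotp u x + dotp x x.
  rewrite /dotp mulr_sumr mulr_sumr -sumrB -big_split /=; apply: eq_bigr => r _; ring.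
rewrite e hu -/t in h; lra.
Qed.

Lemma dotpB d (u x z : 'I_d -> RR) : dotp u (fun r => x r - z r) = dotp u x - dotp u z.
Proof. by rewrite /dotp -sumrB; apply: eq_bigr => r _; rewrite mulrBr. Qed.

Lemma dotpZ d (u x : 'I_d -> RR) c : dotp u (fun r => c * x r) = c * dotp u x.
Proof. by rewrite /dotp mulr_sumr; apply: eq_bigr => r _; rewrite mulrCA. Qed.

Lemma dotp_sum d (I : finType) (u : 'I_d -> RR) (x : I -> 'I_d -> RR) :
  dotp u (fun r => \sum_j x j r) = \sum_j dotp u (x j).
Proof.
rewrite /dotp exchange_big /=; apply: eq_bigr => r _; by rewrite mulr_sumr.
Qed.

Lemma sum_ffun1 (k N : nat) (j : 'I_k) (phi : 'I_N -> RR) :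
  \sum_(f : {ffun 'I_k -> 'I_N}) phi (f j) = (N%:R) ^+ k.-1 * \sum_a phi a.
Proof.
pose F (i : 'I_k) (a : 'I_N) := if i == j then phi a else 1.
have h1 : forall f : {ffun 'I_k -> 'I_N}, \prod_i F i (f i) = phi (f j).
  move=> f; rewrite (bigD1 j) //= big1 ?mulr1 /F ?eqxx // => i /negPf ->; done.
rewrite (eq_bigr (fun f : {ffun 'I_k -> 'I_N} => \prod_i F i (f i))); last by move=> f _; rewrite h1.
rewrite -bigA_distr_bigA (bigD1 j) //= mulrC; congr (_ * _).
  rewrite (eq_bigr (fun _ => N%:R)); last first.
    move=> i /negPf hi; rewrite /F hi sumr_const card_ord; by rewrite -[_ *+ _]mulr_natl mulr1.
  rewrite prodr_const; congr (_ ^+ _).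
  by rewrite cardC1 card_ord.
by apply: eq_bigr => a _; rewrite /F eqxx.
Qed.

Lemma sum_ffun2 (k N : nat) (j j' : 'I_k) (phi psi : 'I_N -> RR) : j != j' ->
  \sum_a phi a = 0 ->
  \sum_(f : {ffun 'I_k -> 'I_N}) phi (f j) * psi (f j') = 0.
Proof.
move=> hjj h0.
pose F (i : 'I_k) (a : 'I_N) := if i == j then phi a else if i == j' then psi a else 1.
have h1 : forall f : {ffun 'I_k -> 'I_N}, \prod_i F i (f i) = phi (f j) * psi (f j').
  move=> f; rewrite (bigD1 j) //= (bigD1 j') /=; last by rewrite eq_sym.
  rewrite big1 ?mulr1 /F ?eqxx.
    by rewrite eq_sym (negPf hjj).
  by move=> i /andP [/negPf -> /negPf ->].
rewrite (eq_bigr (fun f : {ffun 'I_k -> 'I_N} => \prod_i F i (f i))); last by move=> f _; rewrite h1.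
rewrite -bigA_distr_bigA (bigD1 j) //=.
have -> : \sum_(a < N) F j a = 0 by apply: etrans h0; apply: eq_bigr => a _; rewrite /F eqxx.
by rewrite mul0r.
Qed.
Lemma sum1d_aux (s : RR) : 0 < s -> forall B : nat,
  \sum_(t < B.+2) s / (s + t%:R ^+ 2) <= 1 + 2 * s - s / B.+1%:R.
Proof.
move=> hs; elim=> [|B IH].
  rewrite big_ord_recr big_ord_recr big_ord0 /= add0r expr0n /= addr0 divff; last by rewrite gt_eqF.
  rewrite expr1n invr1 mulr1.
  have : s / (s + 1) <= s.
    rewrite ler_pdivrMr; last lra.
    nra.
  lra.
rewrite big_ord_recr /=.
set T := (B.+2%:R : RR).
have hT : T = B.+1%:R + 1 by rewrite /T -natr1.
have hB0 : (0 : RR) < B.+1%:R by rewrite ltr0n.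
have h1 : s / (s + T ^+ 2) <= s / (B.+1%:R * T).
  apply: ler_wpM2l; first lra.
  have hp1 : 0 < s + T ^+ 2 by have := sqr_ge0 T; lra.
  have hp2 : 0 < B.+1%:R * T by apply: mulr_gt0; lra.
  have hle : B.+1%:R * T <= s + T ^+ 2 by rewrite hT; nra.
  by rewrite lef_pV2 // posrE.
have h2 : s / (B.+1%:R * T) = s / B.+1%:R - s / T.
  field; apply/andP; split; apply/eqP => e0; rewrite ?e0 in hB0 hT; lra.
apply: le_trans (lerD IH h1) _; rewrite h2.
by rewrite addrA subrK.
Qed.

Lemma sum1d (s : RR) (B : nat) : 0 < s ->
  \sum_(t < B.+1) s / (s + t%:R ^+ 2) <= 1 + 2 * s.
Proof.
move=> hs; case: B => [|B].
  rewrite big_ord_recr big_ord0 /= add0r expr0n /= addr0 divff; last by rewrite gt_eqF.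
  lra.
apply: le_trans (sum1d_aux hs B) _.
have : 0 <= s / B.+1%:R by apply: divr_ge0; [lra | apply: ler0n].
move: (s / B.+1%:R) => t ht; lra.
Qed.
Lemma lnM' (x y : RR) : 0 < x -> 0 < y -> ln (x * y) = ln x + ln y.
Proof. by move=> hx hy; rewrite lnM // posrE. Qed.

Lemma lnle (x y : RR) : 0 < x -> x <= y -> ln x <= ln y.
Proof. move=> hx hxy; rewrite ler_ln // posrE //; exact: lt_le_trans hxy. Qed.

Lemma lnX (n : nat) (x : RR) : 0 < x -> ln (x ^+ n) = n%:R * ln x.
Proof. by move=> hx; rewrite lnXn // mulr_natl. Qed.
Section Blocks.
Variables (n k N : nat).
Hypothesis hkN : (k * N <= n)%N.

Lemma iota_lt (j : 'I_k) (a : 'I_N) : (j * N + a < n)%N.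
Proof. have := ltn_ord j; have := ltn_ord a; nia. Qed.

Definition iota (j : 'I_k) (a : 'I_N) : 'I_n := Ordinal (iota_lt j a).

Lemma iota_inj j a j' a' : iota j a = iota j' a' -> j = j' /\ a = a'.
Proof.
move/(congr1 val) => /= h.
have hN : (0 < N)%N by apply: leq_ltn_trans (ltn_ord a).
have ha := ltn_ord a; have ha' := ltn_ord a'.
have e1 : ((j * N + a) %/ N = j)%N by rewrite divnMDl // divn_small // addn0.
have e2 : ((j' * N + a') %/ N = j')%N by rewrite divnMDl // divn_small // addn0.
have e3 : ((j * N + a) %% N = a)%N by rewrite modnMDl modn_small.
have e4 : ((j' * N + a') %% N = a')%N by rewrite modnMDl modn_small.
split; apply: val_inj => /=.
  by rewrite -e1 -e2 h.
by rewrite -e3 -e4 h.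
Qed.

Definition sf (f : {ffun 'I_k -> 'I_N}) : {set 'I_n} := [set iota j (f j) | j : 'I_k].

Lemma card_sf f : #|sf f| == k.
Proof.
rewrite /sf card_imset ?card_ord //.
by move=> j j' /iota_inj [].
Qed.

Definition Sk (f : {ffun 'I_k -> 'I_N}) : ksub n k := exist _ (sf f) (card_sf f).

Lemma Snk_Sk f j a : Snk (Sk f) (iota j a) = (f j == a).
Proof.
rewrite /Snk /= /sf; apply/imsetP/eqP.
  by case=> j' _ /iota_inj [-> ->].
by move=> <-; exists j.
Qed.
End Blocks.
Section Main.
Variables (n k N d : nat).
Hypothesis hkN : (k * N <= n)%N.
Hypothesis hN3 : (3 <= N)%N.
Hypothesis hk : (0 < k)%N.
Hypothesis hd : (0 < d)%N.
Variables (U : ksub n k -> 'I_d -> RR) (V : 'I_n -> 'I_d -> RR) (m : RR).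
Hypothesis hm : 0 < m.
Hypothesis hU : forall s, unitv (U s).
Hypothesis hV : forall i, unitv (V i).
Hypothesis hsep : forall s i, if Snk s i then m <= dotp (U s) (V i) else dotp (U s) (V i) <= - m.

Local Notation FF := {ffun 'I_k -> 'I_N}.
Definition Uf (f : FF) := U (Sk hkN f).
Definition W j a := V (iota hkN j a).
Definition cen (j : 'I_k) : 'I_d -> RR := fun r => (N%:R)^-1 * \sum_(a < N) W j a r.
Definition ee j a : 'I_d -> RR := fun r => W j a r - cen j r.
Definition y (f : FF) : 'I_d -> RR := fun r => \sum_(j < k) ee j (f j) r.
Definition ham (f g : FF) : nat := (\sum_(j < k) (f j != g j))%N.

Lemma Nr3 : 3 <= (N%:R : RR).
Proof. by rewrite (ler_nat RR 3 N). Qed.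

Lemma sep (f : FF) (j : 'I_k) (a : 'I_N) : if f j == a then m <= dotp (Uf f) (W j a) else dotp (Uf f) (W j a) <= - m.
Proof. by have := hsep (Sk hkN f) (iota hkN j a); rewrite Snk_Sk. Qed.

Lemma dotp_e (u : 'I_d -> RR) (j : 'I_k) (b : 'I_N) : dotp u (ee j b) = dotp u (W j b) - (N%:R)^-1 * \sum_a dotp u (W j a).
Proof. by rewrite /ee dotpB /cen dotpZ dotp_sum. Qed.

Lemma dotp_y (u : 'I_d -> RR) (f : FF) : dotp u (y f) = \sum_j dotp u (ee j (f j)).
Proof. by rewrite /y dotp_sum. Qed.

Lemma key1 (f g : FF) : 2 * m * (ham f g)%:R <= dotp (Uf f) (fun r => y f r - y g r).
Proof.
rewrite dotpB !dotp_y -sumrB /ham natr_sum mulr_sumr; apply: ler_sum => j _.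
rewrite !dotp_e.
have := sep f j (f j); rewrite eqxx => h1.
have := sep f j (g j); case: eqP => [-> _ | hne h2] /=.
  lra.
rewrite /=; lra.
Qed.

Lemma key2 (f : FF) : k%:R * (4/3 * m) <= dotp (Uf f) (y f).
Proof.
rewrite dotp_y.
have -> : k%:R * (4/3 * m) = \sum_(j < k) (4/3 * m) by rewrite sumr_const card_ord mulr_natl.
apply: ler_sum => j _.
rewrite dotp_e (bigD1 (f j)) //=.
set p := dotp _ (W j (f j)).
have hp : m <= p by have := sep f j (f j); rewrite eqxx.
have hS : \sum_(a < N | a != f j) dotp (Uf f) (W j a) <= (- m) * (N%:R - 1).
  apply: le_trans (_ : \sum_(a < N | a != f j) (- m) <= _).
    apply: ler_sum => a ha; have := sep f j a; by rewrite eq_sym (negPf ha).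
  rewrite sumr_const cardC1 card_ord.
  have -> : (- m) *+ N.-1 = (- m) * (N%:R - 1) by rewrite -[(- m) *+ _]mulr_natr -subn1 natrB //; lia.
  done.
have N3 := Nr3.
have hNi : (N%:R : RR)^-1 * N%:R = 1 by rewrite mulVf //; apply/eqP; lra.
have hNi0 : 0 < (N%:R : RR)^-1 by rewrite invr_gt0; lra.
have hNi3 : (N%:R : RR)^-1 <= 1/3.
  rewrite -(ler_pM2r (_ : (0:RR) < 3 * N%:R)); last lra.
  have -> : (N%:R : RR)^-1 * (3 * N%:R) = 3 by rewrite mulrCA hNi mulr1.
  have -> : 1 / 3 * (3 * N%:R) = (N%:R : RR) by field.
  done.
set S := \sum_(a < N | a != f j) _ in hS *.
set iN := (N%:R : RR)^-1 in hNi hNi0 hNi3 *.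
have h1 : iN * S <= iN * (- m * (N%:R - 1)) by apply: ler_wpM2l; lra.
have h2 : iN * (- m * (N%:R - 1)) = - m * (iN * N%:R) + m * iN by ring.
rewrite hNi in h2.
have h3 : m - m * iN <= p - iN * p.
  have : (1 - iN) * m <= (1 - iN) * p by apply: ler_wpM2l; lra.
  have -> : (1 - iN) * m = m - m * iN by ring.
  by have -> : (1 - iN) * p = p - iN * p by ring.
have h4 : m * iN <= m / 3.
  have := ler_wpM2l (ltW hm) hNi3.
  lra.
rewrite mulrDr; lra.
Qed.

Lemma Nr0 : (N%:R : RR) != 0.
Proof. have := Nr3; apply: contraTneq => ->; lra. Qed.

Lemma sum_ee j r : \sum_(a < N) ee j a r = 0.
Proof.
rewrite /ee sumrB /cen sumr_const card_ord.
have -> : ((N%:R)^-1 * \sum_(a < N) W j a r) *+ N = \sum_(a < N) W j a r.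
  by rewrite -mulr_natr mulrC mulrA mulfV ?Nr0 // mul1r.
by rewrite subrr.
Qed.

Lemma sum_ee2 j r : \sum_(a < N) ee j a r ^+ 2 <= \sum_(a < N) W j a r ^+ 2.
Proof.
set c := cen j r; set S := \sum_(a < N) W j a r.
have hc : c * N%:R = S by rewrite /c /cen mulrC mulrA mulfV ?Nr0 // mul1r.
have e : \sum_(a < N) ee j a r ^+ 2 = \sum_(a < N) W j a r ^+ 2 - 2 * c * S + c ^+ 2 * N%:R.
  have -> : 2 * c * S = \sum_(a < N) 2 * c * W j a r by rewrite /S mulr_sumr.
  rewrite /ee -/c -sumrB.
  have -> : c ^+ 2 * N%:R = \sum_(a < N) c ^+ 2 by rewrite sumr_const card_ord mulr_natr.
  rewrite -big_split /=; apply: eq_bigr => a _; ring.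
rewrite e.
have -> : c ^+ 2 * N%:R = c * S by rewrite -hc; ring.
have : 0 <= c * S by rewrite -hc mulrA -expr2 mulr_ge0 ?sqr_ge0 ?ler0n.
lra.
Qed.

Lemma unitW j a : \sum_(r < d) W j a r ^+ 2 = 1.
Proof. by have := hV (iota hkN j a); rewrite /unitv /dotp => <-; apply: eq_bigr => r _; rewrite expr2. Qed.

Lemma sumsq : \sum_(f : FF) dotp (y f) (y f) <= k%:R * N%:R ^+ k.
Proof.
have e1 : forall f : FF, dotp (y f) (y f) =
   \sum_(r < d) \sum_(j < k) \sum_(j' < k) ee j (f j) r * ee j' (f j') r.
  move=> f; rewrite /dotp; apply: eq_bigr => r _; rewrite /y mulr_suml; apply: eq_bigr => j _.
  by rewrite mulr_sumr.
rewrite (eq_bigr _ (fun f _ => e1 f)) exchange_big /=.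
have e2 : forall r : 'I_d, \sum_(f : FF) \sum_(j < k) \sum_(j' < k) ee j (f j) r * ee j' (f j') r
     = \sum_(j < k) N%:R ^+ k.-1 * \sum_(a < N) ee j a r ^+ 2.
  move=> r; rewrite exchange_big /=; apply: eq_bigr => j _.
  rewrite exchange_big /= (bigD1 j) //= [X in _ + X]big1 ?addr0.
    have := @sum_ffun1 k N j (fun a => ee j a r * ee j a r); rewrite /= => ->.
    congr (_ * _); apply: eq_bigr => a _; by rewrite expr2.
  move=> j' hj'; apply: (@sum_ffun2 k N j j' (fun a => ee j a r) (fun a => ee j' a r)).
    by rewrite eq_sym.
  exact: sum_ee.
rewrite (eq_bigr _ (fun r _ => e2 r)).
apply: le_trans (_ : \sum_(r < d) \sum_(j < k) N%:R ^+ k.-1 * \sum_(a < N) W j a r ^+ 2 <= _).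
  apply: ler_sum => r _; apply: ler_sum => j _; apply: ler_wpM2l; first by rewrite exprn_ge0 ?ler0n.
  exact: sum_ee2.
rewrite exchange_big /=.
have -> : k%:R * N%:R ^+ k = \sum_(j < k) N%:R ^+ k.-1 * \sum_(a < N) (1 : RR).
  rewrite sumr_const card_ord sumr_const card_ord -[_ *+ k]mulr_natr -exprSr prednK //.
  by rewrite mul1r mulr_natl.
apply: ler_sum => j _; rewrite -mulr_sumr; apply: ler_wpM2l; first by rewrite exprn_ge0 ?ler0n.
rewrite exchange_big /=; apply: ler_sum => a _; by rewrite unitW.
Qed.

Lemma dotp_ge0 (x : 'I_d -> RR) : 0 <= dotp x x.
Proof. by apply: sumr_ge0 => r _; rewrite -expr2 sqr_ge0. Qed.

Lemma cardFF : #|{: FF}| = (N ^ k)%N.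
Proof. by rewrite card_ffun !card_ord. Qed.

Lemma NkR : (N%:R : RR) ^+ k = #|{: FF}|%:R.
Proof. by rewrite cardFF natrX. Qed.

Lemma Nk_gt0 : 0 < (N%:R : RR) ^+ k.
Proof. by apply: exprn_gt0; have := Nr3; lra. Qed.

Lemma qbound : k%:R * m ^+ 2 <= 9 / 16.
Proof.
set c := (k%:R * (4/3 * m)) ^+ 2.
have h : forall f : FF, c <= dotp (y f) (y f).
  move=> f; apply: le_trans (cs (y f) (hU _)).
  have := key2 f; have : 0 <= k%:R * (4 / 3 * m).
    apply: mulr_ge0; first exact: ler0n.
    have := hm; move=> hm0. apply: mulr_ge0 => //. lra.
  rewrite /c; move=> h0 h1; nra.
have := sumsq; have : \sum_(f : FF) c <= \sum_(f : FF) dotp (y f) (y f) by apply: ler_sum => f _.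
rewrite sumr_const card_ffun !card_ord -[c *+ _]mulr_natr natrX => h1 h2.
have h3 : c * (N%:R ^+ k) <= k%:R * (N%:R ^+ k) by lra.
rewrite ler_pM2r in h3; last exact: Nk_gt0.
have hk1 : (1 : RR) <= k%:R by rewrite (ler_nat RR 1 k).
move: h3; rewrite /c => h3.
have h4 : k%:R * (k%:R * m ^+ 2) * (16/9) <= k%:R * 1.
  have -> : k%:R * (k%:R * m ^+ 2) * (16/9) = (k%:R * (4 / 3 * m)) ^+ 2 by field.
  lra.
have hm2 : 0 <= m ^+ 2 by apply: sqr_ge0.
nra.
Qed.

Definition Good : {set FF} := [set f : FF | dotp (y f) (y f) <= 2 * k%:R].

Lemma markov : (N%:R : RR) ^+ k <= 2 * #|Good|%:R.
Proof.
have hB : (#|~: Good|%:R : RR) * (2 * k%:R) <= k%:R * N%:R ^+ k.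
  apply: le_trans sumsq.
  apply: le_trans (_ : \sum_(f in ~: Good) dotp (y f) (y f) <= _).
    rewrite -sum1_card natr_sum mulr_suml; apply: ler_sum => f.
    rewrite !inE -ltNge mul1r => h; exact: ltW.
  rewrite [X in _ <= X](bigID (fun f => f \in ~: Good)) /= lerDl.
  by apply: sumr_ge0 => f _; apply: dotp_ge0.
have hc := cardsC Good; rewrite card_ffun !card_ord in hc.
have hk0 : (0 : RR) < k%:R by rewrite ltr0n.
have e : (N%:R : RR) ^+ k = #|Good|%:R + #|~: Good|%:R by rewrite -natrD hc natrX.
rewrite e in hB *.
have : (#|~: Good|%:R : RR) * 2 <= #|Good|%:R + #|~: Good|%:R.
  by rewrite -(ler_pM2l hk0); lra.
lra.
Qed.

Definition aa : RR := k%:R * m / (8 * Num.sqrt d%:R).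

Lemma dR0 : (0 : RR) < d%:R.
Proof. by rewrite ltr0n. Qed.

Lemma kR1 : (1 : RR) <= k%:R.
Proof. by rewrite (ler_nat RR 1 k). Qed.

Lemma aa_gt0 : 0 < aa.
Proof.
rewrite /aa; apply: divr_gt0; first by apply: mulr_gt0 => //; have := kR1; lra.
by apply: mulr_gt0; [lra | rewrite sqrtr_gt0 dR0].
Qed.

Lemma aa2 : aa ^+ 2 * d%:R = (k%:R * m) ^+ 2 / 64.
Proof.
have hd0 := dR0.
have hs : Num.sqrt (d%:R : RR) ^+ 2 = d%:R by rewrite sqr_sqrtr //; lra.
have hs0 : Num.sqrt (d%:R : RR) != 0 by rewrite sqrtr_eq0 -ltNge.
rewrite /aa; set s := Num.sqrt (d%:R : RR) in hs hs0 *.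
rewrite -hs; field; exact: hs0.
Qed.

Definition z (f : FF) (r : 'I_d) : int := Num.floor (y f r / aa).

Definition BB : nat := (\max_(f : FF) \max_(r < d) `|z f r|)%N.

Lemma z_le f r : (`|z f r| <= BB)%N.
Proof.
have h1 := @leq_bigmax _ (fun r => `|z f r|%N) r.
have h2 := @leq_bigmax _ (fun f => (\max_(r < d) `|z f r|)%N) f.
exact: leq_trans h1 h2.
Qed.

Definition code (f : FF) : {ffun 'I_d -> bool * 'I_BB.+1} :=
  [ffun r => (z f r < 0, inord `|z f r|%N)].

Lemma code_z f g : code f = code g -> forall r, z f r = z g r.
Proof.
move=> e r; have := congr1 (fun c : {ffun 'I_d -> bool * 'I_BB.+1} => c r) e; rewrite !ffunE; case=> hs ha.
have hab : `|z f r|%N = `|z g r|%N.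
  rewrite -(inordK (n' := BB) (m := `|z f r|%N)); last by rewrite ltnS z_le.
  by rewrite ha inordK // ltnS z_le.
by rewrite (intEsign (z f r)) (intEsign (z g r)) hs hab.
Qed.

Lemma floor_bounds (u : RR) : (Num.floor u)%:~R <= u /\ u < (Num.floor u)%:~R + 1.
Proof. split; first exact: floor_le. by have := floorD1_gt u; rewrite intrD. Qed.

Lemma code_close f g r : code f = code g -> (y f r - y g r) ^+ 2 <= aa ^+ 2.
Proof.
move=> e; have hz := code_z e r; move: hz; rewrite /z => hz; clear e.
have [h1 h2] := floor_bounds (y f r / aa).
have [h3 h4] := floor_bounds (y g r / aa).
rewrite hz in h1 h2.
set Z := ((Num.floor _)%:~R : RR) in h1 h2 h3 h4.
have ha := aa_gt0.
have ef : y f r = aa * (y f r / aa) by field; apply/eqP => e0; by rewrite e0 ltxx in ha.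
have eg : y g r = aa * (y g r / aa) by field; apply/eqP => e0; by rewrite e0 ltxx in ha.
set u := y f r / aa in ef h1 h2; set v := y g r / aa in eg h3 h4.
rewrite ef eg.
have : (u - v) ^+ 2 <= 1 by nra.
have -> : (aa * u - aa * v) ^+ 2 = aa ^+ 2 * (u - v) ^+ 2 by ring.
move=> h; have := ler_wpM2l (sqr_ge0 aa) h; rewrite mulr1; done.
Qed.

Lemma ham_small f g : code f = code g -> (4 * ham f g <= k)%N.
Proof.
move=> e.
set D := fun r => y f r - y g r.
have h1 : dotp D D <= (k%:R * m) ^+ 2 / 64.
  rewrite -aa2 /dotp; apply: le_trans (_ : \sum_(r < d) aa ^+ 2 <= _).
    apply: ler_sum => r _; rewrite -expr2; exact: code_close.
  by rewrite sumr_const card_ord mulr_natr.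
have h2 := cs D (hU (Sk hkN f)).
have h3 := key1 f g; rewrite -/D in h3.
have := hm; move=> hm0.
set h := (ham f g)%:R in h3.
have h0 : 0 <= h by apply: ler0n.
have hk0 : 0 <= (k%:R : RR) by apply: ler0n.
have h4 : (2 * m * h) ^+ 2 <= (k%:R * m) ^+ 2 / 64.
  apply: le_trans h1; apply: le_trans h2; rewrite /Uf in h3.
  have : 0 <= 2 * m * h by apply: mulr_ge0 => //; lra.
  nra.
have h5 : 256 * h ^+ 2 <= k%:R ^+ 2.
  have : m ^+ 2 * (256 * h ^+ 2) <= m ^+ 2 * k%:R ^+ 2.
    have -> : m ^+ 2 * (256 * h ^+ 2) = 64 * (2 * m * h) ^+ 2 by ring.
    have -> : m ^+ 2 * k%:R ^+ 2 = 64 * ((k%:R * m) ^+ 2 / 64) by field.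
    lra.
  rewrite ler_pM2l //; apply: exprn_gt0 => //.
have h6 : 16 * h <= k%:R by nra.
have : ((4 * ham f g)%N%:R : RR) <= k%:R by rewrite natrM /h in h6 *; lra.
by rewrite ler_nat.
Qed.

Definition sig : RR := 256 / (k%:R * m ^+ 2) + 2.

Lemma zsq f : f \in Good -> \sum_(r < d) ((z f r)%:~R : RR) ^+ 2 <= d%:R * sig.
Proof.
rewrite inE => hG.
have ha := aa_gt0.
have h1 : forall r, ((z f r)%:~R : RR) ^+ 2 <= 2 * (y f r / aa) ^+ 2 + 2.
  move=> r; have [h1 h2] := floor_bounds (y f r / aa); rewrite /z.
  set Z := ((Num.floor _)%:~R : RR) in h1 h2 *; set u := y f r / aa in h1 h2 *.
  have hw : (u - Z) * (u - Z) <= 1 by nra.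
  have hs : 0 <= (u + (u - Z)) ^+ 2 by apply: sqr_ge0.
  have -> : Z ^+ 2 = 2 * u ^+ 2 + 2 - ((u + (u - Z)) ^+ 2 - 2 * ((u - Z) * (u - Z)) + 2) by ring.
  lra.
apply: le_trans (_ : \sum_(r < d) (2 * (y f r / aa) ^+ 2 + 2) <= _).
  by apply: ler_sum => r _; apply: h1.
rewrite big_split /= sumr_const card_ord -mulr_sumr.
have e : \sum_(r < d) (y f r / aa) ^+ 2 = dotp (y f) (y f) / aa ^+ 2.
  rewrite /dotp mulr_suml; apply: eq_bigr => r _; rewrite expr_div_n expr2 //.
rewrite e.
have hk1 := kR1; have hd0 := dR0.
have e2 : 2 * k%:R / aa ^+ 2 = d%:R * (128 / (k%:R * m ^+ 2)).
  have -> : aa ^+ 2 = (k%:R * m) ^+ 2 / 64 / d%:R.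
    by rewrite -aa2 mulfK //; apply/eqP => e0; rewrite e0 in hd0; lra.
  have hk0' : (k%:R : RR) != 0 by apply/eqP => e0; rewrite e0 in hk1; lra.
  have hd0' : (d%:R : RR) != 0 by apply/eqP => e0; rewrite e0 in hd0; lra.
  have hm0' : m != 0 by apply/eqP => e0; have := hm; rewrite e0; lra.
  by field; rewrite ?hk0' ?hd0' ?hm0'.
have h3 : dotp (y f) (y f) / aa ^+ 2 <= 2 * k%:R / aa ^+ 2.
  by rewrite ler_pM2r // invr_gt0 exprn_gt0.
rewrite /sig; rewrite e2 in h3.
have -> : d%:R * (256 / (k%:R * m ^+ 2) + 2) = 2 * (d%:R * (128 / (k%:R * m ^+ 2))) + 2 * d%:R by ring.
rewrite -mulr_natr; lra.
Qed.

Lemma sig_gt0 : 0 < sig.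
Proof.
rewrite /sig; have : 0 <= 256 / (k%:R * m ^+ 2).
  apply: divr_ge0; first lra.
  by apply: mulr_ge0; [apply: ler0n | apply: sqr_ge0].
move: (256 / _) => t ht; lra.
Qed.

Definition wt (p : bool * 'I_BB.+1) : RR := sig / (sig + (p.2 : nat)%:R ^+ 2).

Lemma wt_ge0 p : 0 <= wt p.
Proof.
have hs := sig_gt0; apply: divr_ge0; first lra.
have := sqr_ge0 ((p.2 : nat)%:R : RR); move: (_ ^+ 2) => t ht; lra.
Qed.

Lemma sum_wt : \sum_(p : bool * 'I_BB.+1) wt p <= 2 * (1 + 2 * sig).
Proof.
rewrite -(pair_bigA _ (fun b (t : 'I_BB.+1) => wt (b, t))) big_bool /=.
have h := sum1d BB sig_gt0.
have -> : \sum_(j < BB.+1) wt (true, j) = \sum_(t < BB.+1) sig / (sig + t%:R ^+ 2) by [].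
move: (\sum_(t < BB.+1) _) h => t h; lra.
Qed.

Lemma code_sq f r : (((code f r).2 : nat)%:R : RR) ^+ 2 = ((z f r)%:~R) ^+ 2.
Proof.
rewrite ffunE /= inordK; last by rewrite ltnS z_le.
by rewrite natr_absz intr_norm real_normK // num_real.
Qed.

Lemma agm f : f \in Good -> 1 <= 2 ^+ d * \prod_(r < d) wt (code f r).
Proof.
move=> hG; have hs := sig_gt0.
pose E (r : 'I_d) : RR := (sig + ((code f r).2 : nat)%:R ^+ 2) / sig.
have hE0 : forall r, 0 < E r.
  move=> r; apply: divr_gt0 => //.
  have := sqr_ge0 (((code f r).2 : nat)%:R : RR); move: (_ ^+ 2) => t ht; lra.
have ewt : forall r, wt (code f r) = (E r)^-1 by move=> r; rewrite /wt /E invf_div.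
rewrite (eq_bigr (fun r => (E r)^-1)); last by move=> r _; rewrite ewt.
rewrite prodfV.
have hsum : \sum_(r < d) E r <= 2 * d%:R.
  have e : \sum_(r < d) E r = d%:R + (\sum_(r < d) ((z f r)%:~R : RR) ^+ 2) / sig.
    rewrite mulr_suml.
    have -> : (d%:R : RR) = \sum_(r < d) 1 by rewrite sumr_const card_ord.
    rewrite -big_split /=; apply: eq_bigr => r _; rewrite /E code_sq.
    field; by rewrite gt_eqF.
  rewrite e.
  have h := zsq hG.
  have : (\sum_(r < d) ((z f r)%:~R : RR) ^+ 2) / sig <= d%:R.
    by rewrite ler_pdivrMr.
  move: (_ / sig) => t ht; lra.
have hagm := (leif_AGM (A := 'I_d) (E := E) (fun r _ => ltW (hE0 r))).1.
rewrite card_ord in hagm.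
have hP : 0 < \prod_(r < d) E r by apply: prodr_gt0 => r _.
have hmu : (\sum_(r in 'I_d) E r) / d%:R <= 2.
  rewrite ler_pdivrMr; last exact: dR0.
  have -> : \sum_(r in 'I_d) E r = \sum_(r < d) E r.
    by apply: eq_bigl => r.
  exact: hsum.
have h2 : \prod_(r < d) E r <= 2 ^+ d.
  apply: le_trans hagm _.
  apply: lerXn2r; rewrite ?inE //.
    apply: divr_ge0; last exact: ler0n.
    by apply: sumr_ge0 => r _; apply: ltW.
  by rewrite nnegrE.
by rewrite -(ler_pM2r hP) mul1r divfK ?gt_eqF.
Qed.

Lemma sum_ext (I : finType) (P : pred I) (F : I -> RR) :
  (forall i, 0 <= F i) -> \sum_(i | P i) F i <= \sum_i F i.
Proof.
move=> h; rewrite [X in _ <= X](bigID P) /= lerDl.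
by apply: sumr_ge0 => i _.
Qed.

Lemma count_codes : #|code @: Good|%:R <= (4 + 8 * sig) ^+ d.
Proof.
have hs := sig_gt0.
have e : (#|code @: Good|%:R : RR) = \sum_(c in code @: Good) (1 : RR) by rewrite sumr_const.
rewrite e.
apply: le_trans (_ : \sum_(c in code @: Good) 2 ^+ d * \prod_(r < d) wt (c r) <= _).
  by apply: ler_sum => c /imsetP [f hf ->]; apply: agm.
apply: le_trans (sum_ext _ _) _.
  move=> c; apply: mulr_ge0; first by apply: exprn_ge0.
  by apply: prodr_ge0 => r _; apply: wt_ge0.
rewrite -mulr_sumr.
have -> : \sum_(c : {ffun 'I_d -> bool * 'I_BB.+1}) \prod_(r < d) wt (c r)
    = \prod_(r < d) \sum_(p : bool * 'I_BB.+1) wt p.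
  by rewrite (bigA_distr_bigA (fun (r : 'I_d) p => wt p)).
rewrite prodr_const card_ord -exprMn.
apply: lerXn2r; rewrite ?nnegrE.
- by apply: mulr_ge0; [lra | apply: sumr_ge0 => p _; apply: wt_ge0].
- lra.
- have := sum_wt; move: (\sum_p _) => t ht; lra.
Qed.

Lemma ball (f0 : FF) :
  \sum_(f in Good | code f == code f0) (1 : RR) <= ((4 * N)%:R) ^+ (k %/ 4) * (5 / 4) ^+ k.
Proof.
set K4 := (k %/ 4)%N.
set y4 := ((4 * N)%:R : RR).
have hN := Nr3.
have hy4 : y4 = 4 * N%:R by rewrite /y4 natrM.
have hy0 : 0 < y4 by rewrite hy4; lra.
set x := y4^-1.
have hx0 : 0 <= x by rewrite /x invr_ge0; lra.
have hx1 : x <= 1 by rewrite /x invf_le1 //; lra.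
have hxy : y4 * x = 1 by rewrite /x mulfV // gt_eqF.
apply: le_trans (_ : \sum_(f in Good | code f == code f0) y4 ^+ K4 * x ^+ ham f0 f <= _).
  apply: ler_sum => f /andP [_ /eqP hc].
  have h4 := ham_small (esym hc).
  have hK : (ham f0 f <= K4)%N by rewrite /K4 leq_divRL // mulnC.
  have := ler_wiXn2l hx0 hx1 hK.
  have : y4 ^+ K4 * x ^+ K4 = 1 by rewrite -exprMn hxy expr1n.
  have : 0 <= y4 ^+ K4 by apply: exprn_ge0; lra.
  move: (y4 ^+ K4) (x ^+ K4) (x ^+ ham f0 f) => a b c ha hab hbc.
  have := ler_wpM2l ha hbc; lra.
apply: le_trans (sum_ext _ _) _.
  by move=> f; apply: mulr_ge0; apply: exprn_ge0; lra.
rewrite -mulr_sumr; apply: ler_wpM2l; first by apply: exprn_ge0; lra.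
have -> : \sum_(f : FF) x ^+ ham f0 f = \sum_(f : FF) \prod_(j < k) x ^+ (f0 j != f j).
  by apply: eq_bigr => f _; rewrite /ham prodrXr.
rewrite -(bigA_distr_bigA (fun (j : 'I_k) (a : 'I_N) => x ^+ (f0 j != a))).
rewrite -[in X in _ <= X](card_ord k) -prodr_const.
apply: ler_prod => j _; apply/andP; split.
  by apply: sumr_ge0 => a _; apply: exprn_ge0.
rewrite (bigD1 (f0 j)) //= eqxx expr0.
rewrite (eq_bigr (fun _ => x)); last by move=> a ha; rewrite eq_sym ha expr1.
rewrite sumr_const cardC1 card_ord.
have : x *+ N.-1 <= 1 / 4.
  have -> : x *+ N.-1 = x * (N.-1)%:R by rewrite mulr_natr.
  have hN1 : ((N.-1)%:R : RR) <= N%:R by rewrite ler_nat leq_pred.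
  have : x * N%:R = 1 / 4.
    have : 4 * (x * N%:R) = y4 * x by rewrite hy4; ring.
    rewrite hxy.
    lra.
  have := ler_wpM2l hx0 hN1; lra.
move: (x *+ _) => t ht; lra.
Qed.

Lemma main_ineq : (N%:R : RR) ^+ k <=
  2 * ((4 + 8 * sig) ^+ d * (((4 * N)%:R) ^+ (k %/ 4) * (5 / 4) ^+ k)).
Proof.
apply: le_trans markov _; apply: ler_wpM2l; first lra.
set X := ((4 * N)%:R) ^+ (k %/ 4) * (5 / 4) ^+ k.
have e : (#|Good|%:R : RR) = \sum_(f in Good) (1 : RR) by rewrite sumr_const.
rewrite e (partition_big_imset code).
apply: le_trans (_ : \sum_(c in code @: Good) X <= _).
  by apply: ler_sum => c /imsetP [f0 hf0 ->]; apply: ball.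
rewrite sumr_const -[X *+ _]mulr_natl; apply: ler_wpM2r.
  by rewrite /X; apply: mulr_ge0; apply: exprn_ge0; [apply: ler0n | lra].
exact: count_codes.
Qed.

Lemma P_bound : 4 + 8 * sig <= (1 + 2 * (m * Num.sqrt k%:R)^-1) ^+ 12.
Proof.
have hq := qbound.
have hk1 := kR1.
set q := k%:R * m ^+ 2 in hq.
have hq0 : 0 < q by rewrite /q; apply: mulr_gt0; [lra | apply: exprn_gt0].
have hsk : Num.sqrt (k%:R : RR) ^+ 2 = k%:R by rewrite sqr_sqrtr //; lra.
have hs0 : 0 < Num.sqrt (k%:R : RR) by rewrite sqrtr_gt0; lra.
set u := (m * Num.sqrt k%:R)^-1.
have hu0 : 0 < u by rewrite /u invr_gt0; apply: mulr_gt0.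
have hu2 : u ^+ 2 = q^-1 by rewrite /u exprVn exprMn hsk /q mulrC.
have hqi : 1 <= q^-1 by rewrite invf_ge1 //; lra.
have hu1 : 1 <= u.
  have : 1 <= u ^+ 2 by rewrite hu2.
  nra.
have h12 : u ^+ 2 <= u ^+ 12 by apply: ler_weXn2l.
have h1 : (2 * u) ^+ 12 <= (1 + 2 * u) ^+ 12.
  by apply: lerXn2r; rewrite ?nnegrE; lra.
have e2 : (2 : RR) ^+ 12 = 4096 by rewrite !exprS expr0; lra.
have e : (2 * u) ^+ 12 = 4096 * u ^+ 12 by rewrite exprMn e2.
rewrite /sig.
have -> : 256 / q = 256 * q^-1 by [].
have : 4096 * u ^+ 2 <= 4096 * u ^+ 12 by lra.
rewrite hu2; lra.
Qed.

Lemma final_bound : k%:R * ln (N%:R) <= 120 * d%:R * ln (1 + 2 * (m * Num.sqrt k%:R)^-1).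
Proof.
set P := 4 + 8 * sig.
set Y := ((4 * N)%:R : RR).
set K4 := (k %/ 4)%N.
have hN := Nr3.
have hsig := sig_gt0.
have hsig2 : 2 <= sig.
  rewrite /sig; have : 0 <= 256 / (k%:R * m ^+ 2).
    apply: divr_ge0; first lra.
    by apply: mulr_ge0; [apply: ler0n | apply: sqr_ge0].
  move: (256 / _) => t ht; lra.
have hP : 16 <= P by rewrite /P; lra.
have hY : Y = 4 * N%:R by rewrite /Y natrM.
have hY0 : 0 < Y by rewrite hY; lra.
have H := main_ineq; rewrite -/P -/Y -/K4 in H.
have hN0 : (0 : RR) < N%:R by lra.
have hP0 : 0 < P by lra.
have h540 : (0 : RR) < 5 / 4 by lra.
have p1 : 0 < P ^+ d by apply: exprn_gt0.
have p2 : 0 < Y ^+ K4 by apply: exprn_gt0.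
have p3 : 0 < (5 / 4 : RR) ^+ k by apply: exprn_gt0.
have p23 : 0 < Y ^+ K4 * (5 / 4) ^+ k by apply: mulr_gt0.
have p123 : 0 < P ^+ d * (Y ^+ K4 * (5 / 4) ^+ k) by apply: mulr_gt0.
have h20 : (0 : RR) < 2 by lra.
have h40 : (0 : RR) < 4 by lra.
have hL := lnle (exprn_gt0 k hN0) H.
rewrite (lnX _ hN0) (lnM' h20 p123) (lnM' p1 p23) (lnM' p2 p3) (lnX _ hP0) (lnX _ hY0) (lnX _ h540) in hL.
rewrite hY (lnM' h40 hN0) in hL.
set a := ln (N%:R : RR) in hL *.
set b := ln P in hL *.
set c2 := ln (2 : RR) in hL.
set c4 := ln (4 : RR) in hL.
set c5 := ln (5 / 4 : RR) in hL.
have ha : 0 <= a by apply: ln_ge0; lra.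
have hc4 : c4 = 2 * c2.
  rewrite /c4 /c2 -(lnX 2 h20); congr ln; rewrite expr2; lra.
have hc2 : 0 <= c2 by apply: ln_ge0; lra.
have hc5 : 0 <= c5 by apply: ln_ge0; lra.
have hb : 4 * c2 <= b.
  rewrite /c2 /b -(lnX 4 h20); apply: lnle; first exact: exprn_gt0.
  rewrite !exprS expr0; lra.
have hnum : 2 * c4 + 8 * c5 <= 5 * a.
  rewrite /c4 /c5 /a -(lnX 2 h40) -(lnX 8 h540) -(lnX 5 hN0).
  rewrite -(lnM' (exprn_gt0 2 h40) (exprn_gt0 8 h540)).
  apply: lnle; first by apply: mulr_gt0; apply: exprn_gt0.
  have h5 : (3 : RR) ^+ 5 <= N%:R ^+ 5 by apply: lerXn2r; rewrite ?nnegrE; lra.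
  move: h5; rewrite !exprS !expr0.
  move: (N%:R * _) => t ht; lra.
have hK : (K4%:R : RR) * 4 <= k%:R.
  have : (K4 * 4 <= k)%N by rewrite /K4 leq_divM.
  by rewrite -(ler_nat RR) natrM.
have hK0 : (0 : RR) <= K4%:R by apply: ler0n.
have hk0 : (0 : RR) <= k%:R by apply: ler0n.
have hd1 : (1 : RR) <= d%:R by rewrite (ler_nat RR 1 d).
have hKt : K4%:R * (c4 + a) * 4 <= k%:R * (c4 + a).
  have : 0 <= c4 + a by lra.
  move: (c4 + a) => t ht.
  have -> : K4%:R * t * 4 = (K4%:R * 4) * t by ring.
  by apply: ler_wpM2r.
have hkn : k%:R * (2 * c4 + 8 * c5) <= k%:R * (5 * a) by apply: ler_wpM2l.
have hdb : b <= d%:R * b.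
  have : 0 <= b by lra.
  move=> hb0; have := ler_wpM2r hb0 hd1; lra.
have hPu := P_bound.
have hlnP : b <= 12 * ln (1 + 2 * (m * Num.sqrt k%:R)^-1).
  rewrite /b -(lnX 12); last first.
    have : 0 < (m * Num.sqrt k%:R)^-1.
      rewrite invr_gt0; apply: mulr_gt0 => //; rewrite sqrtr_gt0; have := kR1; lra.
    move: (_ ^-1) => t ht; lra.
  apply: lnle; [lra | exact: hPu].
have hdl : d%:R * b <= d%:R * (12 * ln (1 + 2 * (m * Num.sqrt k%:R)^-1)).
  by apply: ler_wpM2l; lra.
move: hdl; set L := ln _ => hdl.
move: hL hKt hkn hdb hdl; move: (K4%:R) (k%:R) (d%:R) => K kk dd.
move=> hL hKt hkn hdb hdl.
nra.
Qed.
End Main.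

Theorem theorem1p5 :
  exists C : RR, 0 < C /\
    forall n k d : nat, (0 < n)%N -> (0 < k)%N -> (0 < d)%N -> (3 * k <= n)%N ->
      (0 < mrd d (@Snk n k))%E ->
      C * (k%:R * ln (n%:R / k%:R))
        / ln (1 + 2 * (fine (mrd d (@Snk n k)) * Num.sqrt (k%:R))^-1)
      <= d%:R.
Proof.
exists (1 / 480); split; first lra.
move=> n k d hn hk hd h3k hpos.
set N := (n %/ k)%N.
have hN3 : (2 < N)%N by rewrite /N leq_divRL.
have hkN : (k * N <= n)%N by rewrite mulnC /N leq_divM.
have hk1 : (1 : RR) <= k%:R by rewrite (ler_nat RR 1 k).
have hub : (mrd d (@Snk n k) <= 1%:E)%E.
  rewrite /mrd; apply: ub_ereal_sup => _ [m [hm0 [U [V [hU [hV hsep]]]]] <-].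
  rewrite lee_fin.
  have [->|hm] := eqVneq m 0; first lra.
  have hm1 : 0 < m by rewrite lt_neqAle eq_sym hm hm0.
  have := qbound hkN hN3 hk hd hm1 hU hV hsep.
  have := sqr_ge0 m; clear -hk1 hm1; move: (k%:R) hk1 => kk hk1 h1 h2; nra.
have hfin : mrd d (@Snk n k) \is a fin_num.
  by rewrite ge0_fin_numE ?(ltW hpos) // (le_lt_trans hub (ltry 1)).
have hM := fineK hfin.
set M := fine (mrd d (@Snk n k)) in hM *.
have hM0 : 0 < M by rewrite -lte_fin hM.
have : ((M / 2)%:E < mrd d (@Snk n k))%E by rewrite -hM lte_fin; lra.
rewrite {1}/mrd => /ereal_sup_gt [_ [m [hm0 [U [V [hU [hV hsep]]]]] <-]].
rewrite lte_fin => hmM.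
have hm : 0 < m by lra.
have hF := final_bound hkN hN3 hk hd hm hU hV hsep.
rewrite -/N in hF.
have hs0 : 0 < Num.sqrt (k%:R : RR) by rewrite sqrtr_gt0; lra.
set uM := (M * Num.sqrt k%:R)^-1.
have huM : 0 < uM by rewrite /uM invr_gt0; apply: mulr_gt0.
have hum : (m * Num.sqrt k%:R)^-1 <= 2 * uM.
  have hA : (M / 2) * Num.sqrt k%:R <= m * Num.sqrt k%:R by apply: ler_wpM2r; lra.
  have hA0 : 0 < (M / 2) * Num.sqrt k%:R by apply: mulr_gt0 => //; lra.
  have hB : ((M / 2) * Num.sqrt k%:R)^-1 = 2 * uM.
    rewrite /uM !invfM invrK; ring.
  rewrite -hB lef_pV2 ?posrE //; apply: lt_le_trans hA0 hA.
set L := ln (1 + 2 * uM).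
have hL0 : 0 < L by apply: ln_gt0; lra.
have hLm : ln (1 + 2 * (m * Num.sqrt k%:R)^-1) <= 2 * L.
  have -> : 2 * L = ln ((1 + 2 * uM) ^+ 2) by rewrite lnX //; lra.
  apply: lnle.
    have : 0 < (m * Num.sqrt k%:R)^-1 by rewrite invr_gt0; apply: mulr_gt0.
    move: (_ ^-1) => t ht; lra.
  rewrite expr2.
  have : 0 <= uM * uM by apply: mulr_ge0; lra.
  move: (_ ^-1) hum => t ht h; lra.
have hN0 : (0 : RR) < N%:R by rewrite ltr0n; apply: leq_trans hN3.
have hnk : ln (n%:R / k%:R : RR) <= 2 * ln (N%:R : RR).
  have e : ln ((N%:R : RR) ^+ 2) = 2 * ln (N%:R : RR) by rewrite lnX //; lra.
  apply: le_trans (_ : _ <= ln ((N%:R : RR) ^+ 2)) _; last by rewrite e.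
  apply: lnle.
    by apply: divr_gt0; rewrite ltr0n.
  rewrite ler_pdivrMr; last lra.
  have : (n <= N ^ 2 * k)%N.
    have := ltn_ceil n hk; rewrite -/N => h.
    apply: leq_trans (ltnW h) _; apply: leq_mul => //.
    have : (N.+1 <= N * N)%N by clear -hN3; nia.
    by rewrite expnS expn1.
  by rewrite -(ler_nat RR) natrM natrX.
have hLd : 0 <= ln (1 + 2 * (m * Num.sqrt k%:R)^-1).
  apply: ln_ge0.
  have : 0 < (m * Num.sqrt k%:R)^-1 by rewrite invr_gt0; apply: mulr_gt0.
  move: (_ ^-1) => t ht; lra.
rewrite ler_pdivrMr //.
have hd0 : (0 : RR) <= d%:R by apply: ler0n.
have hk0 : (0 : RR) <= k%:R by apply: ler0n.
have h1 := ler_wpM2l hk0 hnk.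
have h2 := ler_wpM2l hd0 hLm.
move: hF h1 h2; move: (ln (1 + _)) (ln (n%:R / k%:R)) (ln N%:R) => A B Cc.
move=> hF h1 h2.
have e1 : k%:R * (2 * Cc) = 2 * (k%:R * Cc) by ring.
have e2 : d%:R * (2 * L) = 2 * (d%:R * L) by ring.
have e3 : 120 * d%:R * A = 120 * (d%:R * A) by ring.
rewrite e1 in h1; rewrite e2 in h2; rewrite e3 in hF.
lra.
Qed.
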